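(* Let $m \geq 2$ and $1 \leq k \leq m-1$ be integers. For indeterminates $x, s$, write $$1 - xz + s z^m = \prod_{j=1}^{m} \bigl(1 - u_j z\bigr)$$ with $u_1,\dots,u_m$ in an algebraic closure of $\mathbb{Q}(x,s)$, and define $$c(m,k,x,s,z) = \prod_{1 \leq i_1 < i_2 < \cdots < i_k \leq m} \bigl(z - u_{i_1} u_{i_2} \cdots u_{i_k}\bigr),$$ a polynomial in $z$ of degree $\binom{m}{k}$ with coefficients in $\mathbb{Z}[x,s]$. After the substitution $(x,s) \mapsto (x+1,x)$ we have $$1 - (x+1)z + x z^m = (1-z)\prod_{j=2}^{m}(1 - v_j z),$$ with $v_2,\dots,v_m$ in an algebraic closure of $\mathbb{Q}(x)$. Define $$w_{k-1}(m,x,z) = \prod_{2 \leq i_1 < \cdots < i_{k-1} \leq m} \bigl(z - v_{i_1}\cdots v_{i_{k-1}}\bigr), \qquad w_k(m,x,z) = \prod_{2 \leq i_1 < \cdots < i_{k} \leq m} \bigl(z - v_{i_1}\cdots v_{i_{k}}\bigr),$$ where for $k=1$ the empty product of the $v$'s equals $1$, so that $w_0(m,x,z) = z - 1$. Then $$c(m,k,x+1,x,z) = w_{k-1}(m,x,z)\, w_k(m,x,z),$$ and both $w_{k-1}(m,x,z)$ and $w_k(m,x,z)$ are polynomials with integer coefficients, i.e. they lie in $\mathbb{Z}[x,z]$.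
   Context: The polynomial $c(m,k,x,s,z)$ is the characteristic polynomial of the linear recurrence satisfied (in $n$) by the sequence $p_k(n,m,x,s) = (-1)^{k+1}\sum_{1 \leq i_1 < \cdots < i_k \leq m} (u_{i_1}\cdots u_{i_k})^n$, $n \geq 1$. In the factorization after the substitution $(x,s)\mapsto(x+1,x)$, one root of $1-(x+1)z+xz^m$ (in the sense of the factors $1-u_jz$) equals $1$, since $1-(x+1)z+xz^m=(1-z)\bigl(1 - xz\,\tfrac{1-z^{m-1}}{1-z}\bigr)$; the $v_j$ are the remaining $m-1$ such roots. *)

(* Defs.v *)
From HB Require Import structures.
From mathcomp Require Import all_boot all_order all_algebra.
Set Implicit Arguments. Unset Strict Implicit. Unset Printing Implicit Defensive.
Import Order.TTheory GRing.Theory Num.Theory.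
Local Open Scope ring_scope.

Definition rec_poly (L : fieldType) (m : nat) (a b : L) : {poly L} :=
  1 - a *: 'X + b *: 'X^m.

Definition is_rec_roots (L : fieldType) (m : nat) (a b : L) (u : 'I_m -> L) : Prop :=
  rec_poly m a b = \prod_(j < m) (1 - u j *: 'X).

Definition esub_poly (L : fieldType) (n k : nat) (u : 'I_n -> L) : {poly L} :=
  \prod_(S : {set 'I_n} | #|S| == k) ('X - (\prod_(i in S) u i)%:P).

(* Specialisation of W(x,z) in Z[x][z] at a value x of L, giving a polynomial in z. *)
Definition evalZ (L : fieldType) (x : L) (W : {poly {poly int}}) : {poly L} :=
  map_poly (fun p : {poly int} => (map_poly (fun c : int => c%:~R) p).[x]) W.

Arguments rec_poly {L} m a b.
Arguments is_rec_roots {L} m a b u.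
Arguments esub_poly {L} n k u.
Arguments evalZ {L} x W.

(* Main.v *)
From HB Require Import structures.
From mathcomp Require Import all_boot all_order all_algebra.
From mathcomp Require Import fingroup perm mpoly ring zify.
Import GRing.Theory.
Require Import Defs.
Local Open Scope ring_scope.

Lemma esub_perm_gen (R : comNzRingType) (n j : nat) (a : 'I_n -> R) (s : 'S_n) :
  \prod_(S : {set 'I_n} | #|S| == j) ('X - (\prod_(i in S) a (s i))%:P)
  = \prod_(S : {set 'I_n} | #|S| == j) ('X - (\prod_(i in S) a i)%:P).
Proof.
rewrite [RHS](reindex_inj (imset_inj (@perm_inj _ s))) /=.
apply: eq_big => S.
  by rewrite card_imset //; apply: perm_inj.
move=> _; rewrite big_imset //; move=> x y _ _; apply: perm_inj.
Qed.

Lemma mmap_ext (n : nat) (R S : ringType) (f1 f2 : R -> S) (h1 h2 : 'I_n -> S) p :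
  f1 =1 f2 -> h1 =1 h2 -> mmap f1 h1 p = mmap f2 h2 p.
Proof.
move=> ef eh; rewrite /mmap; apply: eq_bigr => m _.
by rewrite ef (mmap1_eq _ eh).
Qed.

Lemma rmorph_mmap (n : nat) (R S T : nzRingType) (g : {rmorphism S -> T})
   (f : R -> S) (h : 'I_n -> S) p :
  g (mmap f h p) = mmap (g \o f) (g \o h) p.
Proof.
rewrite /mmap rmorph_sum; apply: eq_bigr => m _.
rewrite rmorphM /mmap1 rmorph_prod /=; congr (_ * _).
by apply: eq_bigr => i _; rewrite rmorphXn.
Qed.

Lemma mmap_comp (n k : nat) (R : comNzRingType) (S : comNzRingType)
  (f : {rmorphism R -> S}) (h : 'I_k -> S) (t : {mpoly R[n]}) (lq : n.-tuple {mpoly R[k]}) :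
  mmap f h (t \mPo lq) = mmap f (fun i => mmap f h (tnth lq i)) t.
Proof.
rewrite /comp_mpoly rmorph_mmap; apply: mmap_ext => // c /=.
by rewrite mmapC.
Qed.
Definition Gp (n j : nat) : {poly {mpoly int[n]}} :=
  \prod_(S : {set 'I_n} | #|S| == j) ('X - (\prod_(i in S) 'X_i)%:P).

Lemma Gp_sym n j d : (Gp n j)`_d \is symmetric.
Proof.
apply/issymP => s.
rewrite -coef_map /Gp rmorph_prod /=.
rewrite -(@esub_perm_gen _ n j (fun i => 'X_i) s).
have E : forall S : {set 'I_n}, map_poly (msym s) ('X - (\prod_(i in S) 'X_i)%:P)
   = ('X - (\prod_(i in S) 'X_(s i))%:P) :> {poly {mpoly int[n]}}.
  move=> S; rewrite rmorphB /= map_polyX map_polyC /= rmorph_prod /=; congr (_ - _%:P).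
  by apply: eq_bigr => i _; rewrite /msym mmapX mmap1U.
by under eq_bigr => S _ do rewrite E.
Qed.

Lemma Gp_map (L : fieldType) n j (v : 'I_n -> L) :
  map_poly (mmap intr v) (Gp n j) = esub_poly n j v.
Proof.
rewrite /Gp /esub_poly rmorph_prod /=; apply: eq_bigr => S _.
rewrite rmorphB /= map_polyX map_polyC /= rmorph_prod /=; congr (_ - _%:P).
by apply: eq_bigr => i _; rewrite mmapX mmap1U.
Qed.

Definition esymf {R : comNzRingType} {n : nat} (v : 'I_n -> R) k :=
  \sum_(J : {set 'I_n} | #|J| == k) \prod_(i in J) v i.

Lemma mesym_eval (L : fieldType) n (v : 'I_n -> L) k :
  mmap intr v (mesym n int k) = esymf v k.
Proof.
rewrite /mesym /esymf rmorph_sum; apply: eq_bigr => J _.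
by rewrite rmorph_prod; apply: eq_bigr => i _ /=; rewrite mmapX mmap1U.
Qed.

Lemma coef_prod_lin {R : comNzRingType} {n} (a : 'I_n -> R) k :
  (\prod_i (1 - a i *: 'X))`_k = (-1) ^+ k * esymf a k.
Proof.
have -> : \prod_i (1 - a i *: 'X) = \prod_i (- (a i *: 'X) + 1 : {poly R}).
  by apply: eq_bigr => i _; rewrite addrC.
rewrite bigA_distr coef_sum /esymf mulr_sumr.
rewrite (bigID (fun J : {set 'I_n} => #|J| == k)) /= addrC big1 ?add0r; last first.
  move=> J /negbTE HJ.
  rewrite -big_mkcond /= (eq_bigr (fun i => (- a i) *: 'X)); last by move=> i _; rewrite scaleNr.
  rewrite scaler_prod prodr_const prodrN coefZ coefXn.
  by rewrite eq_sym HJ !mulr0.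
apply: eq_big => // J /eqP HJ.
rewrite -big_mkcond /= (eq_bigr (fun i => (- a i) *: 'X)); last by move=> i _; rewrite scaleNr.
rewrite scaler_prod prodr_const prodrN coefZ coefXn.
by rewrite HJ eqxx mulr1.
Qed.

Lemma integral N j : exists W : {poly {poly int}},
  forall (L : fieldType) (x : L) (v : 'I_N -> L),
  (forall i : 'I_N, esymf v i.+1 = (-1) ^+ i * x) -> esub_poly N j v = evalZ x W.
Proof.
pose G := Gp N j.
pose td d := sval (sym_fundamental (Gp_sym N j d)).
have tdP d : td d \mPo [tuple mesym N int i.+1 | i < N] = G`_d.
  by rewrite /td; case: (sym_fundamental _) => t [].
pose c (i : 'I_N) : {poly int} := ((-1) ^+ i)%:P * 'X.
exists (\poly_(d < size G) mmap (@polyC int) c (td d)).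
move=> L x v Hv.
apply/polyP => d.
rewrite -Gp_map coef_map /evalZ coef_map_id0; last by rewrite map_poly0 horner0.
rewrite coef_poly.
case: ltnP => Hd; last first.
  by rewrite -/G nth_default // raddf0 map_poly0 horner0.
change (mmap intr v (Gp N j)`_d = (map_poly intr (mmap (@polyC int) c (td d))).[x]).
rewrite -[(Gp N j)`_d](tdP d).
rewrite (@mmap_comp N N int L intr v (td d)).
have -> : (map_poly intr (mmap (@polyC int) c (td d))).[x]
   = (horner_eval x \o map_poly (intr : int -> L)) (mmap (@polyC int) c (td d)) by [].
rewrite rmorph_mmap; apply: mmap_ext => [a|i] /=.
  by rewrite /horner_eval map_polyC hornerC.
rewrite /horner_eval tnth_map tnth_ord_tuple mesym_eval Hv /c rmorphM /= map_polyC map_polyX.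
rewrite hornerMX hornerC; congr (_ * _).
by rewrite -[RHS]/(((-1) ^+ i : int)%:~R) rmorphXn rmorphN1.
Qed.

Lemma esym_from_poly (L : fieldType) N (x : L) (v : 'I_N -> L) :
  \prod_i (1 - v i *: 'X) = 1 - x *: ('X * \sum_(i < N) 'X^i) ->
  forall i : 'I_N, esymf v i.+1 = (-1) ^+ i * x.
Proof.
move=> H i.
have := coef_prod_lin v i.+1; rewrite H coefB coef1 /= coefZ coefXM /= coef_sum.
rewrite (bigD1 i) //= coefXn eqxx big1 ?addr0; last first.
  by move=> j /negbTE Hj; rewrite coefXn val_eqE eq_sym Hj.
rewrite /= mulr1 sub0r => /(congr1 (fun y => (-1) ^+ i.+1 * y)).
rewrite signrMK => <-.
by rewrite exprS mulN1r mulNr mulrN opprK.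
Qed.

Lemma rec_poly_fact (L : fieldType) N (x : L) :
  rec_poly N.+1 (x + 1) x = (1 - 'X) * (1 - x *: ('X * \sum_(i < N) 'X^i)).
Proof.
have hS := subrX1 ('X : {poly L}) N.
rewrite /rec_poly -!mul_polyC polyCD polyC1 exprS.
transitivity (1 - 'X + x%:P * 'X * ('X^N - 1)); first by ring.
rewrite hS; ring.
Qed.

Lemma one_subX_neq0 (L : fieldType) : (1 - 'X : {poly L}) != 0.
Proof.
rewrite -oppr_eq0 opprB -polyC1 polyXsubC_eq0 //.
Qed.

Lemma lin_neq0 {L : fieldType} (c : L) : (1 - c *: 'X : {poly L}) != 0.
Proof.
apply/eqP => /(congr1 (fun p : {poly L} => p`_0)).
rewrite coefB coef1 coefZ coefX /= mulr0 subr0 coef0 => /eqP.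
by rewrite oner_eq0.
Qed.

Lemma size_lin_le {L : fieldType} (c : L) : (size (1 - c *: 'X : {poly L})%R <= 2)%N.
Proof.
apply: leq_trans; first exact: size_add.
rewrite size_poly1 size_opp geq_max /=.
apply: leq_trans; first exact: size_scale_leq.
by rewrite size_polyX.
Qed.

Lemma size_lin {L : fieldType} (c : L) : c != 0 -> size (1 - c *: 'X : {poly L}) = 2.
Proof.
move=> cnz; rewrite addrC size_addl size_opp size_scale // size_polyX //.
by rewrite size_poly1.
Qed.

Lemma size_prod_lin_le {L : fieldType} (s : seq L) :
  (size (\prod_(c <- s) (1 - c *: 'X : {poly L}))%R <= (size s).+1)%N.
Proof.
elim: s => [|c s IH]; first by rewrite big_nil size_poly1.
rewrite big_cons; apply: leq_trans; first exact: size_mul_leq.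
have := size_lin_le c; move: IH => /=; case: (size _) => [|a]; case: (size _) => [|b] //=; lia.
Qed.

Lemma size_prod_lin {L : fieldType} (s : seq L) : 0 \notin s ->
  size (\prod_(c <- s) (1 - c *: 'X)) = (size s).+1.
Proof.
elim: s => [|c s IH]; first by rewrite big_nil size_poly1.
rewrite in_cons negb_or eq_sym => /andP [cnz Hs].
rewrite big_cons size_mul ?lin_neq0 //; last first.
  by rewrite -size_poly_eq0 IH.
by rewrite size_lin // IH.
Qed.

Lemma prod_lin_perm (L : fieldType) (s t : seq L) : size s = size t ->
  \prod_(c <- s) (1 - c *: 'X) = \prod_(c <- t) (1 - c *: 'X) -> perm_eq s t.
Proof.
elim: s t => [|c s IH] t.
  by case: t.
move=> Hsz H.
have [ct|nct] := boolP (c \in t).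
  have Ht := perm_to_rem ct.
  rewrite (perm_big _ Ht) !big_cons /= in H.
  have H' := mulfI (lin_neq0 c) H.
  have Hs : size s = size (rem c t) by rewrite size_rem //= -Hsz.
  have := IH _ Hs H'.
  rewrite -(perm_cons c) => P1.
  by apply: (perm_trans P1); rewrite perm_sym.
exfalso.
have [cz|cnz] := eqVneq c 0.
  have H0 : 0 \notin t by rewrite -cz.
  have := @size_prod_lin _ t H0; rewrite -H big_cons cz scale0r subr0 mul1r.
  have := size_prod_lin_le s; move: Hsz => /= <- + E; rewrite E; lia.
have := congr1 (fun p => p.[c^-1]) H.
rewrite !horner_prod big_cons /= !hornerE mulfV // subrr mul0r => /esym /eqP.
rewrite prodf_seq_eq0 => /hasP [b bt] /=.
rewrite !hornerE subr_eq0 => /eqP E.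
move: nct; suff -> : c = b by rewrite bt.
by rewrite -(divfK cnz b) -E mul1r.
Qed.

Lemma fun_perm (L : fieldType) n (a b : 'I_n -> L) :
  \prod_i (1 - a i *: 'X) = \prod_i (1 - b i *: 'X) ->
  exists s : 'S_n, forall i, a i = b (s i).
Proof.
move=> H.
have : perm_eq [tuple a i | i < n] [tuple b i | i < n].
  apply: prod_lin_perm; first by rewrite !size_tuple.
  rewrite !big_tuple; under eq_bigr => i _ do rewrite tnth_mktuple.
  by under [RHS]eq_bigr => i _ do rewrite tnth_mktuple.
case/tuple_permP => s Hs; exists s => i.
have := congr1 (fun q => nth 0 q i) Hs.
by rewrite -!tnth_nth !tnth_mktuple.
Qed.

Lemma esub_perm (L : fieldType) n k (a : 'I_n -> L) (s : 'S_n) :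
  esub_poly n k (fun i => a (s i)) = esub_poly n k a.
Proof. exact: esub_perm_gen. Qed.

Definition ext1 {L : fieldType} {N} (v : 'I_N -> L) (i : 'I_N.+1) : L :=
  if unlift ord0 i is Some j then v j else 1.

Lemma esub_split (L : fieldType) N k (v : 'I_N -> L) :
  esub_poly N.+1 k.+1 (ext1 v) = esub_poly N k v * esub_poly N k.+1 v.
Proof.
pose h2 (T : {set 'I_N}) : {set 'I_N.+1} := [set lift ord0 j | j in T].
pose h1 T := ord0 |: h2 T.
pose h' (S : {set 'I_N.+1}) := [set j | lift ord0 j \in S].
have linj : injective (lift (@ord0 N)) := @lift_inj _ ord0.
have in2 T : ord0 \notin h2 T.
  by apply/imsetP => [[j _ /eqP]]; rewrite (negbTE (neq_lift _ _)).
have hK2 T : h' (h2 T) = T.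
  by apply/setP => j; rewrite inE mem_imset.
have hK1 T : h' (h1 T) = T.
  by apply/setP => j; rewrite inE in_setU1 mem_imset // eq_sym (negbTE (neq_lift _ _)).
have card2 T : #|h2 T| = #|T| by rewrite card_imset.
have card1 T : #|h1 T| = #|T|.+1 by rewrite cardsU1 in2 card2.
have e0 : ext1 v ord0 = 1 by rewrite /ext1 unlift_none.
have eS j : ext1 v (lift ord0 j) = v j by rewrite /ext1 liftK.
have prod2 T : \prod_(i in h2 T) ext1 v i = \prod_(i in T) v i.
  by rewrite big_imset /=; [apply: eq_bigr => i _; rewrite eS | move=> x y _ _; apply: linj].
have prod1 T : \prod_(i in h1 T) ext1 v i = \prod_(i in T) v i.
  by rewrite big_setU1 //= e0 mul1r prod2.
have surj S : h2 (h' S) = S :\ ord0.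
  apply/setP => i; rewrite in_setD1; case: (unliftP ord0 i) => [j ->|->].
    by rewrite mem_imset // inE eq_sym (negbTE (neq_lift _ _)).
  by rewrite eqxx (negbTE (in2 _)).
rewrite /esub_poly (bigID (fun S : {set 'I_N.+1} => ord0 \in S)) /=.
congr (_ * _).
  rewrite (reindex_onto h1 h') /=; last first.
    move=> S /andP [_ H0]; rewrite /h1 surj setD1K //.
  apply: eq_big; last by move=> T _; rewrite prod1.
  move=> T.
  by rewrite hK1 eqxx card1 eqSS andbT /h1 setU11 andbT.
rewrite (reindex_onto h2 h') /=; last first.
  move=> S /andP [_ H0]; rewrite surj; apply/setP => i; rewrite in_setD1.
  by case: eqP => // ->; rewrite (negbTE H0).
apply: eq_big; last by move=> T _; rewrite prod2.
move=> T.
by rewrite hK2 eqxx card2 in2 !andbT.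
Qed.

Lemma esub_ext (L : fieldType) n k (a b : 'I_n -> L) :
  a =1 b -> esub_poly n k a = esub_poly n k b.
Proof.
move=> e; rewrite /esub_poly; apply: eq_bigr => S _.
by congr (_ - _%:P); apply: eq_bigr => i _.
Qed.

Theorem mainTheorem1 (m k : nat) (hm : (2 <= m)%N) (hk1 : (1 <= k)%N) (hk2 : (k <= m - 1)%N) :
  exists Wkm1 Wk : {poly {poly int}},
  forall (L : closedFieldType), [pchar L] =i pred0 ->
  forall (x : L) (u : 'I_m -> L) (v : 'I_m.-1 -> L),
    is_rec_roots m (x + 1) x u ->
    rec_poly m (x + 1) x = (1 - 'X) * \prod_(j < m.-1) (1 - v j *: 'X) ->
    [/\ esub_poly m k u = esub_poly m.-1 k.-1 v * esub_poly m.-1 k v,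
        esub_poly m.-1 k.-1 v = evalZ x Wkm1
      & esub_poly m.-1 k v = evalZ x Wk].
Proof.
case: m hm hk2 => [|[|n]] // _ _.
case: k hk1 => [|k] // _.
have [W1 HW1] := integral n.+1 k.
have [W2 HW2] := integral n.+1 k.+1.
exists W1, W2 => L _ x u v Hu Hv.
have Hprod : \prod_j (1 - v j *: 'X) = 1 - x *: ('X * \sum_(i < n.+1) 'X^i).
  by apply: (mulfI (one_subX_neq0 L)); rewrite -Hv rec_poly_fact.
have He := @esym_from_poly L n.+1 x v Hprod.
split; [|exact: HW1|exact: HW2].
have : \prod_i (1 - u i *: 'X) = \prod_i (1 - ext1 v i *: 'X).
  rewrite -Hu Hv [RHS]big_ord_recl; congr (_ * _).
    by rewrite /ext1 unlift_none scale1r.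
  by apply: eq_bigr => i _; rewrite /ext1 liftK.
case/fun_perm => s Hs.
by rewrite (@esub_ext L _ _ _ _ Hs) (@esub_perm L _ _ (ext1 v) s) esub_split.
Qed.
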